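(* Let $n\ge 2$ and let $\mathcal{A}=\langle Q,\Sigma,\delta\rangle$ be an $n$-state DFA whose transition monoid is $T_n$, with $x\in\Sigma$ a fixed letter of rank $n-1$. Then the digraph $\Gamma_{2n-3}$ is strongly connected.
   Context: Words act on states letter by letter from left to right. The transition monoid is the monoid of transformations of $Q$ generated by the letters; $T_n$ is the monoid of all self-maps of an $n$-element set. A letter has rank $n-1$ if $|Q\cdot x|=n-1$. For such $x$, $\mathrm{excl}(x)$ is the unique state in $Q\setminus Q\cdot x$, and $\mathrm{dupl}(x)$ is the unique state $p$ with $p=q_1\cdot x=q_2\cdot x$ for some $q_1\ne q_2$. Let $\Pi\subseteq\Sigma$ be the set of letters acting as permutations of $Q$, and $\Pi^i$ the set of words of length at most $i$ over $\Pi$ (including the empty word). $\Gamma_i$ is the digraph with vertex set $Q$ and edge set $E_i=\{(\mathrm{excl}(x)\cdot w,\ \mathrm{dupl}(x)\cdot w)\mid w\in\Pi^i\}$. A digraph is strongly connected if for every ordered pair of vertices there is a directed path from the first to the second. *)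

(* Defs.v *)
From mathcomp Require Import all_boot.
From Stdlib Require Import Relations.
Set Implicit Arguments. Unset Strict Implicit. Unset Printing Implicit Defensive.

Section DFA.
Variables (Q Sigma : finType) (delta : Sigma -> Q -> Q).

Definition act (q : Q) (w : seq Sigma) : Q := foldl (fun p a => delta a p) q w.

Definition full_transition_monoid : Prop :=
  forall f : Q -> Q, exists w : seq Sigma, forall q, act q w = f q.

Definition image_of (x : Sigma) : {set Q} := [set delta x q | q : Q].

Definition rank_pred (x : Sigma) : Prop := #|image_of x| = #|Q| - 1.

(* excl(x): a state not in Q . x (unique when x has rank n-1) *)
Definition is_excl (x : Sigma) (e : Q) : Prop := e \notin image_of x.

(* dupl(x): a state with two distinct preimages (unique when x has rank n-1) *)
Definition is_dupl (x : Sigma) (d : Q) : Prop :=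
  exists q1 q2 : Q, q1 <> q2 /\ delta x q1 = d /\ delta x q2 = d.

Definition is_perm_letter (a : Sigma) : bool := injectiveb (delta a).

Definition in_Pi_i (i : nat) (w : seq Sigma) : bool :=
  all is_perm_letter w && (size w <= i).

Definition Gamma_edge (x : Sigma) (i : nat) (p q : Q) : Prop :=
  exists e d w, is_excl x e /\ is_dupl x d /\ in_Pi_i i w /\
                p = act e w /\ q = act d w.

Definition strongly_connected (E : Q -> Q -> Prop) : Prop :=
  forall p q : Q, clos_refl_trans Q E p q.

End DFA.

(* Main.v *)
Require Import Defs.
From mathcomp Require Import all_boot.
From mathcomp Require Import fingroup perm.
From Stdlib Require Import Relations ClassicalEpsilon.
From mathcomp Require Import zify.

Set Implicit Arguments. Unset Strict Implicit. Unset Printing Implicit Defensive.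

Definition asb (P : Prop) : bool :=
  if excluded_middle_informative P then true else false.

Lemma asbP (P : Prop) : reflect P (asb P).
Proof. rewrite /asb; case: excluded_middle_informative => h; by constructor. Qed.

Section Proof.
Variables (Q Sigma : finType) (delta : Sigma -> Q -> Q).

Local Notation act := (act delta).
Local Notation perml := (is_perm_letter delta).

Lemma act_cons q a w : act q (a :: w) = act (delta a q) w.
Proof. by []. Qed.

Lemma act_rcons q w a : act q (rcons w a) = delta a (act q w).
Proof. by rewrite /Defs.act foldl_rcons. Qed.

Lemma act_cat q w1 w2 : act q (w1 ++ w2) = act (act q w1) w2.
Proof. by rewrite /Defs.act foldl_cat. Qed.

Lemma inj_all_perm w : injective (fun q => act q w) -> all perml w.
Proof.
elim: w => [|a w IH] // Hinj.
have Ha : injective (delta a).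
  by move=> q1 q2 E; apply: Hinj; rewrite /= E.
apply/andP; split; first by apply/injectiveP.
apply: IH => r1 r2 E.
have [g gK Kg] := injF_bij Ha.
rewrite -(Kg r1) -(Kg r2) in E *.
by congr (delta a); apply: Hinj; rewrite !act_cons.
Qed.

Lemma all_perm_inj w : all perml w -> injective (fun q => act q w).
Proof.
elim: w => [_ ? ? //|a w IH] /= /andP[/injectiveP Ha Hw] q1 q2 E.
exact/Ha/(IH Hw).
Qed.

Hypothesis full : full_transition_monoid delta.

Lemma perm_word (s : {perm Q}) : exists w, all perml w /\ forall q, act q w = s q.
Proof.
have [w Hw] := full (fun q => s q).
exists w; split => //; apply: inj_all_perm => q1 q2.
rewrite !Hw; exact: perm_inj.
Qed.

Lemma rel_word (M : Q -> Q -> Prop) :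
  (forall a p q, perml a -> M p q -> M (delta a p) (delta a q)) ->
  forall w p q, all perml w -> M p q -> M (act p w) (act q w).
Proof.
move=> HM; elim => [|a w IH] // p q /andP[Ha Hw] Hpq.
rewrite !act_cons; apply: IH => //; exact: HM.
Qed.

Lemma rel_all (M : Q -> Q -> Prop) u v :
  (forall a p q, perml a -> M p q -> M (delta a p) (delta a q)) ->
  u != v -> M u v -> forall p q, p != q -> M p q.
Proof.
move=> HM uv Muv p q pq.
set v' := tperm u p v.
have [w1 [H1 E1]] := perm_word (tperm u p).
have [w2 [H2 E2]] := perm_word (tperm v' q).
have Hall : all perml (w1 ++ w2) by rewrite all_cat H1 H2.
have := rel_word HM Hall Muv.
rewrite !act_cat !E1 !E2.
have v'p : v' != p.
  by rewrite /v' -{2}(tpermL u p) (inj_eq perm_inj) eq_sym.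
rewrite tpermL -/v' tpermL tpermD //; by rewrite eq_sym.
Qed.

Lemma set_all (S : {set Q}) s :
  (forall a q, perml a -> q \in S -> delta a q \in S) -> s \in S -> S = setT.
Proof.
move=> HS sS; apply/setP => r; rewrite inE.
have [w [Hw E]] := perm_word (tperm s r).
have := @rel_word (fun p q => p \in S) (fun a p q Ha => HS a p Ha) w s s Hw sS.
by rewrite E tpermL.
Qed.

Variables (e d : Q).
Hypothesis ed : e != d.

Definition E i p q := exists w, in_Pi_i delta i w /\ p = act e w /\ q = act d w.
Definition R i := clos_refl_trans Q (E i).

Lemma in_Pi_mono i j w : i <= j -> in_Pi_i delta i w -> in_Pi_i delta j w.
Proof. move=> ij /andP[H1 H2]; apply/andP; split => //; exact: leq_trans ij. Qed.

Lemma in_Pi_rcons i w a : perml a -> in_Pi_i delta i w -> in_Pi_i delta i.+1 (rcons w a).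
Proof.
move=> Ha /andP[H1 H2]; apply/andP; split.
  by rewrite -cats1 all_cat H1 /= Ha.
by rewrite size_rcons.
Qed.

Lemma E_neq i p q : E i p q -> p != q.
Proof.
move=> [w [/andP[Hw _] [-> ->]]]; apply: contra ed => /eqP H.
apply/eqP; exact: (all_perm_inj Hw H).
Qed.

Lemma R_mono i j p q : i <= j -> R i p q -> R j p q.
Proof.
move=> ij; elim => [a b [w [Hw [-> ->]]]| a | a b c _ H1 _ H2].
- apply: rt_step; exists w; split => //; exact: in_Pi_mono Hw.
- exact: rt_refl.
- exact: rt_trans H1 H2.
Qed.

Lemma R_shift i a p q : perml a -> R i p q -> R i.+1 (delta a p) (delta a q).
Proof.
move=> Ha; elim => [b c [w [Hw [-> ->]]]| b | b c f _ H1 _ H2].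
- apply: rt_step; exists (rcons w a); split; first exact: in_Pi_rcons.
  by rewrite !act_rcons.
- exact: rt_refl.
- exact: rt_trans H1 H2.
Qed.

Definition O i := [set q | asb (exists w, in_Pi_i delta i w /\ act d w = q)].

Lemma O_mono i : O i \subset O i.+1.
Proof.
apply/subsetP => q; rewrite !inE => /asbP[w [Hw Ew]].
apply/asbP; exists w; split => //; exact: in_Pi_mono Hw.
Qed.

Lemma O_step i a q : perml a -> q \in O i -> delta a q \in O i.+1.
Proof.
move=> Ha; rewrite !inE => /asbP[w [Hw Ew]].
apply/asbP; exists (rcons w a); split; first exact: in_Pi_rcons.
by rewrite act_rcons Ew.
Qed.

Lemma O_card i : O i = setT \/ i.+1 <= #|O i|.
Proof.
elim: i => [|i IH].
  right; rewrite card_gt0; apply/set0Pn; exists d; rewrite inE; apply/asbP.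
  by exists [::].
have [Heq|Hneq] := eqVneq (O i.+1) (O i).
  left; rewrite Heq; apply: (@set_all _ d).
    by move=> a q Ha qO; rewrite -Heq; exact: O_step.
  rewrite inE; apply/asbP; by exists [::].
have Hp : O i \proper O i.+1 by rewrite properEneq eq_sym Hneq O_mono.
case: IH => [Ht|IH].
  by move: Hp; rewrite Ht properE subsetT andbF.
right; exact: leq_ltn_trans IH (proper_card Hp).
Qed.

Lemma O_full : O #|Q|.-1 = setT.
Proof.
case: (O_card #|Q|.-1) => // H.
apply/eqP; rewrite eqEcard subsetT cardsT.
by move: H; case: #|Q| => [|k] //= _; rewrite leq0n.
Qed.

Lemma in_edge q : exists p, E #|Q|.-1 p q.
Proof.
have : q \in O #|Q|.-1 by rewrite O_full inE.
rewrite inE => /asbP[w [Hw Ew]]; exists (act e w); exists w; by split.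
Qed.

Definition Anc i q := [set p | asb (R i p q)].

Lemma cycle_ex : exists u v, u != v /\ R #|Q|.-1 u v /\ R #|Q|.-1 v u.
Proof.
set k := #|Q|.-1.
case: (@arg_minnP _ d predT (fun q => #|Anc k q|) isT) => q _ Hmin.
have [p Hpq] := in_edge q.
exists p, q; split; first exact: E_neq Hpq.
split; first exact: rt_step.
case: (asbP (R k q p)) => // Hn; exfalso.
have Hsub : Anc k p \proper Anc k q.
  rewrite properE; apply/andP; split.
    apply/subsetP => r; rewrite !inE => /asbP Hr; apply/asbP.
    exact: rt_trans Hr (rt_step _ _ _ _ Hpq).
  apply/subsetP => /(_ q); rewrite !inE => H.
  have : asb (R k q q) by apply/asbP; exact: rt_refl.
  by move/H/asbP.
have := Hmin p isT; have := proper_card Hsub; rewrite /=; lia.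
Qed.

Definition Mb i p q := asb (R i p q /\ R i q p).
Definition cl i p := [set q | Mb i p q].
Definition c i := #|[set cl i p | p in [set: Q]]|.

Lemma Mb_refl i p : Mb i p p.
Proof. apply/asbP; split; exact: rt_refl. Qed.
Lemma Mb_sym i p q : Mb i p q -> Mb i q p.
Proof. by move/asbP=> [H1 H2]; apply/asbP. Qed.
Lemma Mb_trans i p q r : Mb i p q -> Mb i q r -> Mb i p r.
Proof.
move/asbP=> [H1 H2] /asbP [H3 H4]; apply/asbP; split; [exact: rt_trans H1 H3 | exact: rt_trans H4 H2].
Qed.
Lemma Mb_mono i j p q : i <= j -> Mb i p q -> Mb j p q.
Proof. move=> ij /asbP[H1 H2]; apply/asbP; split; [exact: R_mono H1 | exact: R_mono H2]. Qed.

Lemma cl_eq i p q : Mb i p q -> cl i p = cl i q.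
Proof.
move=> H; apply/setP => z; rewrite !inE; apply/idP/idP => Hz.
  exact: Mb_trans (Mb_sym H) Hz.
exact: Mb_trans H Hz.
Qed.

Lemma c_le i j : i <= j -> c j <= c i /\
   ((exists p q, Mb j p q /\ ~~ Mb i p q) -> c j < c i).
Proof.
move=> ij.
pose g (C : {set Q}) := [set z | [exists p in C, Mb j p z]].
have Hg p : g (cl i p) = cl j p.
  apply/setP => z; rewrite !inE; apply/existsP/idP.
    move=> [p' /andP[]]; rewrite inE => H1 H2.
    exact: Mb_trans (Mb_mono ij H1) H2.
  move=> H; exists p; by rewrite inE Mb_refl.
have Himg : [set cl j p | p in [set: Q]] = g @: [set cl i p | p in [set: Q]].
  rewrite -imset_comp; apply: eq_imset => p /=; by rewrite Hg.
rewrite /c Himg; split; first exact: leq_imset_card.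
move=> [p [q [Hj Hi]]].
rewrite ltn_neqAle leq_imset_card andbT.
apply/negP => /imset_injP Hinj.
have : cl i p = cl i q.
  apply: Hinj.
  - by apply/imsetP; exists p; rewrite ?inE.
  - by apply/imsetP; exists q; rewrite ?inE.
  by rewrite !Hg; exact: cl_eq.
move/setP => /(_ q); rewrite !inE Mb_refl => H.
by move: Hi; rewrite H.
Qed.

Lemma c_le1 i : c i <= 1 -> forall p q, R i p q.
Proof.
move=> /card_le1_eqP H p q.
have : cl i q = cl i p.
  apply: H; apply/imsetP; first (by exists p; rewrite ?inE).
  by exists q; rewrite ?inE.
move/setP => /(_ q); rewrite !inE Mb_refl => /esym/asbP[? _] //.
Qed.

Lemma c_total i : (forall p q, Mb i p q) -> c i <= 1.
Proof.
move=> H; rewrite /c.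
have -> : [set cl i p | p in [set: Q]] = [set setT].
  apply/setP => C; rewrite inE; apply/imsetP/eqP.
    move=> [p _ ->]; apply/setP => z; by rewrite !inE H.
  move=> ->; exists d; rewrite ?inE //; apply/setP => z; by rewrite !inE H.
by rewrite cards1.
Qed.

Lemma c_step i : (exists u v, u != v /\ Mb i u v) -> 1 < c i -> c i.+1 < c i.
Proof.
move=> [u [v [uv Muv]]] c1.
have [Hle Hlt] := c_le (leqnSn i).
case: (boolP [exists p, exists q, Mb i.+1 p q && ~~ Mb i p q]).
  move/existsP => [p /existsP [q /andP [H1 H2]]]; apply: Hlt; by exists p, q.
move/negP => Hn; exfalso.
have Hb : forall p q, Mb i.+1 p q -> Mb i p q.
  move=> p q H; case: (boolP (Mb i p q)) => // H'; case: Hn.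
  by apply/existsP; exists p; apply/existsP; exists q; rewrite H H'.
have Hcl : forall a p q, perml a -> Mb i p q -> Mb i (delta a p) (delta a q).
  move=> a p q Ha /asbP[H1 H2]; apply: Hb; apply/asbP; split; exact: R_shift.
have Hall := rel_all Hcl uv Muv.
have : c i <= 1.
  apply: c_total => p q; case: (eqVneq p q) => [->|pq]; first exact: Mb_refl.
  exact: Hall.
by rewrite leqNgt c1.
Qed.

Lemma c_bound : c #|Q|.-1 < #|Q|.
Proof.
have [u [v [uv [H1 H2]]]] := cycle_ex.
rewrite /c -[X in _ < X]cardsT ltn_neqAle leq_imset_card andbT.
apply/negP => /imset_injP Hinj.
have : u = v.
  apply: Hinj; rewrite ?inE //.
  apply: cl_eq; apply/asbP; by split.
by move/eqP; rewrite (negbTE uv).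
Qed.

Lemma main_bound j : c (#|Q|.-1 + j) <= maxn 1 (#|Q|.-1 - j).
Proof.
have [u [v [uv [H1 H2]]]] := cycle_ex.
elim: j => [|j IH].
  have := c_bound; rewrite addn0; lia.
rewrite addnS.
have Hcyc : exists u v, u != v /\ Mb (#|Q|.-1 + j) u v.
  exists u, v; split => //; apply: (@Mb_mono #|Q|.-1); first exact: leq_addr.
  apply/asbP; by split.
have [Hle _] := c_le (leqnSn (#|Q|.-1 + j)).
case: (leqP (c (#|Q|.-1 + j)) 1) => Hc.
  lia.
have := c_step Hcyc Hc; lia.
Qed.

End Proof.

Theorem lemma2 (n : nat) (Q Sigma : finType) (delta : Sigma -> Q -> Q)
  (x : Sigma) :
  2 <= n -> #|Q| = n ->
  full_transition_monoid delta ->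
  rank_pred delta x ->
  strongly_connected (Gamma_edge delta x (2 * n - 3)).
Proof.
move=> n2 Qn full rk.
have [e He] : exists e, e \notin image_of delta x.
  apply/existsP; rewrite -negb_forall; apply/negP => /forallP H.
  move: rk; rewrite /rank_pred.
  have -> : image_of delta x = setT by apply/setP => z; rewrite inE H.
  rewrite cardsT; lia.
have [q1 [q2 [q12 Eq]]] : exists q1 q2, q1 <> q2 /\ delta x q1 = delta x q2.
  apply: Classical_Prop.NNPP => Hn.
  have Hinj : injective (delta x).
    move=> a b E; apply: Classical_Prop.NNPP => ab; apply: Hn; by exists a, b.
  move: rk; rewrite /rank_pred /image_of.
  rewrite (card_imset _ Hinj) !Qn; lia.
set d := delta x q1.
have ed : e != d.
  apply: contra He => /eqP ->; rewrite /image_of; apply/imsetP; by exists q1.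
move=> p q.
have Hk : 2 * n - 3 = #|Q|.-1 + (#|Q|.-1 - 1) by lia.
have := main_bound full ed (#|Q|.-1 - 1).
rewrite -Hk => Hc.
have HR : R delta e d (2 * n - 3) p q by apply: (c_le1 (i := 2*n-3)); lia.
elim: HR => [a b [w [Hw [-> ->]]] | a | a b c0 _ H1 _ H2].
- apply: rt_step; exists e, d, w; split => //; split => //.
  exists q1, q2; by split.
- exact: rt_refl.
- exact: rt_trans H1 H2.
Qed.
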